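(* Let $A,B\in\mathfrak{J}_n$ be nonempty. If $A,B$ satisfy the zero-measure condition, then $xA\,\widetilde\oplus\,(1-x)B$ is Jordan measurable for every $x\in\mathbb{R}$. Otherwise it is Jordan measurable for every $x\in\mathbb{R}$ with $x\ne\frac12$.
   Context: $\mu$ is $n$-dimensional Lebesgue measure; a set $E$ is Jordan measurable iff it is bounded and $\mu(\partial E)=0$. $\operatorname{ci}(A)$ is the closure of the interior of $A$. $\mathfrak{J}_n$ is the family of bounded sets $A\subset\mathbb{R}^n$ with $A=\operatorname{ci}(A)$ and $\mu(\partial A)=0$. For nonempty bounded $A$, $d_S(p,A)=d(p,\partial A)$ if $p\in A$ and $d_S(p,A)=-d(p,\partial A)$ if $p\notin A$, with $d(q,E)=\min_{e\in E}\|q-e\|$. For nonempty $A,B\in\mathfrak{J}_n$, $x\in\mathbb{R}$: $f_{A,B,x}(p)=x\,d_S(p,A)+(1-x)\,d_S(p,B)$, the distance average is $xA\,\widetilde\oplus\,(1-x)B=\{p: f_{A,B,x}(p)\ge0\}$, and $\Omega_{A,B,x}=\{p: f_{A,B,x}(p)=0\}$. The sets $A,B$ satisfy the zero-measure condition if $\mu(\Omega_{A,B,1/2})=0$. *)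

(* Defs.v *)
From mathcomp Require Import all_boot.
From Stdlib Require Import Reals ClassicalEpsilon.

Set Implicit Arguments.
Unset Strict Implicit.

Local Open Scope R_scope.

Definition pt (n : nat) := 'I_n -> R.
Definition rset (n : nat) := pt n -> Prop.

Definition enorm n (p : pt n) : R :=
  sqrt (\big[Rplus/0]_(i < n) (p i * p i)).
Definition edist n (p q : pt n) : R := enorm (fun i => p i - q i).

Definition interior n (A : rset n) : rset n :=
  fun p => exists eps, 0 < eps /\ forall q, edist p q < eps -> A q.
Definition closure n (A : rset n) : rset n :=
  fun p => forall eps, 0 < eps -> exists q, A q /\ edist p q < eps.
Definition boundary n (A : rset n) : rset n :=
  fun p => closure A p /\ closure (fun q => ~ A q) p.
Definition ci n (A : rset n) : rset n := closure (interior A).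

Definition bounded n (E : rset n) : Prop :=
  exists M, forall p, E p -> enorm p <= M.
Definition nonempty n (E : rset n) : Prop := exists p, E p.

(* Lebesgue null sets, written out from the definition of Lebesgue outer
   measure: for every eps > 0, E is covered by countably many closed boxes
   [a k, b k] of total volume <= eps. *)
Definition box_vol n (a b : pt n) : R := \big[Rmult/1]_(i < n) (b i - a i).
Definition lebesgue_null n (E : rset n) : Prop :=
  forall eps, 0 < eps ->
    exists a b : nat -> pt n,
      (forall k i, a k i <= b k i) /\
      (forall p, E p -> exists k, forall i, a k i <= p i <= b k i) /\
      (forall N, sum_f_R0 (fun k => box_vol (a k) (b k)) N <= eps).

Definition jordan_measurable n (E : rset n) : Prop :=
  bounded E /\ lebesgue_null (boundary E).

Definition in_Jn n (A : rset n) : Prop :=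
  bounded A /\ (forall p, A p <-> ci A p) /\ lebesgue_null (boundary A).

(* d(q,E) = min_{e in E} ||q - e|| (chosen by Hilbert epsilon; it is the
   minimum whenever the minimum exists, e.g. E closed nonempty). *)
Definition is_min_dist n (q : pt n) (E : rset n) (r : R) : Prop :=
  (exists e, E e /\ edist q e = r) /\ (forall e, E e -> r <= edist q e).
Definition dist_set n (q : pt n) (E : rset n) : R :=
  epsilon (inhabits 0) (is_min_dist q E).

Definition signed_dist n (p : pt n) (A : rset n) : R :=
  epsilon (inhabits 0) (fun r =>
    (A p -> r = dist_set p (boundary A)) /\
    (~ A p -> r = - dist_set p (boundary A))).

Definition fABx n (A B : rset n) (x : R) (p : pt n) : R :=
  x * signed_dist p A + (1 - x) * signed_dist p B.

Definition dist_avg n (A B : rset n) (x : R) : rset n :=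
  fun p => 0 <= fABx A B x p.

Definition Omega n (A B : rset n) (x : R) : rset n :=
  fun p => fABx A B x p = 0.

Definition zero_measure_condition n (A B : rset n) : Prop :=
  lebesgue_null (Omega A B (1/2)).

(* Main.v *)
From HB Require Import structures.
Require Import Defs.
From mathcomp Require Import all_boot.
From Stdlib Require Import Reals Lra Lia ClassicalEpsilon Classical FunctionalExtensionality.
From mathcomp Require Import zify.
Local Open Scope R_scope.
Notation closure := Defs.closure.
Notation bounded := Defs.bounded.
Set Implicit Arguments.
Unset Strict Implicit.

Lemma RplusA : associative Rplus. Proof. move=> a b c; ring. Qed.
Lemma RmultA : associative Rmult. Proof. move=> a b c; ring. Qed.
HB.instance Definition _ := Monoid.isComLaw.Build R 0 Rplus RplusA Rplus_comm Rplus_0_l.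
HB.instance Definition _ := Monoid.isComLaw.Build R 1 Rmult RmultA Rmult_comm Rmult_1_l.
HB.instance Definition _ := Monoid.isMulLaw.Build R 0 Rmult Rmult_0_l Rmult_0_r.
HB.instance Definition _ := Monoid.isAddLaw.Build R Rmult Rplus Rmult_plus_distr_r Rmult_plus_distr_l.

Notation rsum n F := (\big[Rplus/0]_(i < n) F i).

Lemma rsum_ge0 n (F : 'I_n -> R) : (forall i, 0 <= F i) -> 0 <= \big[Rplus/0]_(i < n) F i.
Proof. move=> H; apply: (big_ind (fun x => 0 <= x)) => //; [lra| move=> a b; lra]. Qed.

Lemma rsum_le n (F G : 'I_n -> R) : (forall i, F i <= G i) ->
  \big[Rplus/0]_(i < n) F i <= \big[Rplus/0]_(i < n) G i.
Proof. move=> H; apply: (big_ind2 (fun x y => x <= y)) => //; [lra| move=> a b c d; lra]. Qed.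

Lemma rsum_const n c : \big[Rplus/0]_(i < n) c = INR n * c.
Proof. rewrite big_const_ord; elim: n => [|k IH]; first (simpl; lra).
rewrite S_INR /= IH; lra. Qed.

Lemma rprod_const n c : \big[Rmult/1]_(i < n) c = c ^ n.
Proof. rewrite big_const_ord; elim: n => [|k IH] //=; by rewrite IH. Qed.

Lemma rsum_term_le n (F : 'I_n -> R) j : (forall i, 0 <= F i) -> F j <= \big[Rplus/0]_(i < n) F i.
Proof. move=> H; rewrite (bigD1 j) //=.
rewrite -{1}(Rplus_0_r (F j)); apply: Rplus_le_compat_l.
apply: (big_ind (fun x => 0 <= x)) => //; [lra| move=> a b; lra]. Qed.

Lemma abs_le0 x : Rabs x <= 0 -> x = 0.
Proof. rewrite /Rabs; case: Rcase_abs; lra. Qed.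

Lemma enorm_ge0 n (p : pt n) : 0 <= enorm p.
Proof. apply: sqrt_pos. Qed.

Lemma sq_sum_ge0 n (p : pt n) : 0 <= \big[Rplus/0]_(i < n) (p i * p i).
Proof. apply: rsum_ge0 => i; nra. Qed.

Lemma enorm_sq n (p : pt n) : enorm p * enorm p = \big[Rplus/0]_(i < n) (p i * p i).
Proof. rewrite /enorm sqrt_sqrt //; apply: sq_sum_ge0. Qed.

Lemma coord_le_enorm n (p : pt n) i : Rabs (p i) <= enorm p.
Proof.
apply: Rsqr_incr_0_var; last exact: enorm_ge0.
rewrite /Rsqr enorm_sq -Rabs_mult Rabs_right; last nra.
have h := @rsum_term_le n (fun k => p k * p k) i. apply: h => j; nra. Qed.
Lemma enorm_le_sum n (p : pt n) : enorm p <= \big[Rplus/0]_(i < n) Rabs (p i).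
Proof.
have H0 : 0 <= \big[Rplus/0]_(i < n) Rabs (p i) by apply: rsum_ge0 => i; apply: Rabs_pos.
apply: Rsqr_incr_0_var => //; rewrite /Rsqr enorm_sq.
elim: n p H0 => [|k IH] p H0; first by rewrite !big_ord0; lra.
rewrite !big_ord_recr /=.
set s1 := \big[Rplus/0]_(i < k) _.
set s2 := \big[Rplus/0]_(i < k) _.
have h1 : s1 <= s2 * s2.
  apply: (IH (fun i => p (widen_ord (leqnSn k) i))).
  by apply: rsum_ge0 => i; apply: Rabs_pos.
have h2 : 0 <= s2 by apply: rsum_ge0 => i; apply: Rabs_pos.
have h3 : p ord_max * p ord_max = Rabs (p ord_max) * Rabs (p ord_max).
  by rewrite -Rabs_mult Rabs_right; nra.
have h4 := Rabs_pos (p ord_max). nra. Qed.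

Lemma enorm_bound n (p : pt n) s : (forall i, Rabs (p i) <= s) -> enorm p <= INR n * s.
Proof. move=> H; apply: Rle_trans (enorm_le_sum p) _; rewrite -rsum_const; exact: rsum_le. Qed.

Lemma cs n (u v : pt n) : \big[Rplus/0]_(i < n) (u i * v i) <= enorm u * enorm v.
Proof.
set a := enorm u; set b := enorm v.
have ha : 0 <= a by apply: enorm_ge0.
have hb : 0 <= b by apply: enorm_ge0.
have key : 0 <= \big[Rplus/0]_(i < n) ((b * u i - a * v i) * (b * u i - a * v i)).
  apply: rsum_ge0 => i; apply: Rle_0_sqr.
have E : \big[Rplus/0]_(i < n) ((b * u i - a * v i) * (b * u i - a * v i)) =
   b * b * \big[Rplus/0]_(i < n) (u i * u i) + a * a * \big[Rplus/0]_(i < n) (v i * v i) + (- 2 * a * b) * \big[Rplus/0]_(i < n) (u i * v i).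
  rewrite !big_distrr /= -!big_split /=; apply: eq_bigr => i _; ring.
rewrite -(enorm_sq u) -(enorm_sq v) -/a -/b in E.
rewrite E in key.
case: (Req_dec a 0) => [a0|an0].
  have : forall i, u i = 0.
    move=> i; have := coord_le_enorm u i; rewrite -/a a0; apply: abs_le0.
  move=> u0; rewrite (eq_bigr (fun _ => 0)); last by move=> i _; rewrite u0; ring.
  rewrite rsum_const; nra.
case: (Req_dec b 0) => [b0|bn0].
  have : forall i, v i = 0.
    move=> i; have := coord_le_enorm v i; rewrite -/b b0; apply: abs_le0.
  move=> v0; rewrite (eq_bigr (fun _ => 0)); last by move=> i _; rewrite v0; ring.
  rewrite rsum_const; nra.
have hab : 0 < a * b by apply: Rmult_lt_0_compat; lra.
set S := \big[Rplus/0]_(i < n) (u i * v i) in key *.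
have : 2 * (a * b) * (S - a * b) <= 0 by nra.
move=> h; have : S - a * b <= 0.
  apply: (Rmult_le_reg_l (2 * (a * b))); nra.
lra. Qed.

Lemma enorm_add n (u v : pt n) : enorm (fun i => u i + v i) <= enorm u + enorm v.
Proof.
apply: Rsqr_incr_0_var; last by have := enorm_ge0 u; have := enorm_ge0 v; lra.
rewrite /Rsqr enorm_sq.
have E : \big[Rplus/0]_(i < n) ((u i + v i) * (u i + v i)) =
  \big[Rplus/0]_(i < n) (u i * u i) + \big[Rplus/0]_(i < n) (v i * v i) +
  2 * \big[Rplus/0]_(i < n) (u i * v i).
  rewrite big_distrr /= -!big_split /=; apply: eq_bigr => i _; ring.
rewrite E -!enorm_sq; have := cs u v; nra. Qed.

Lemma enorm_scale n (u : pt n) c : enorm (fun i => c * u i) = Rabs c * enorm u.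
Proof.
rewrite /enorm (eq_bigr (fun i => (c * c) * (u i * u i))); last by move=> i _; ring.
rewrite -big_distrr /= sqrt_mult; [|nra|apply: sq_sum_ge0].
by rewrite -sqrt_Rsqr_abs. Qed.

Lemma enorm_ext n (u v : pt n) : (forall i, u i = v i) -> enorm u = enorm v.
Proof. move=> H; rewrite /enorm; congr sqrt; apply: eq_bigr => i _; by rewrite H. Qed.

Lemma edist_ge0 n (p q : pt n) : 0 <= edist p q.
Proof. exact: enorm_ge0. Qed.

Lemma edist_sym n (p q : pt n) : edist p q = edist q p.
Proof.
rewrite /edist (enorm_ext (v := fun i => -1 * (q i - p i))); last by move=> i; ring.
rewrite enorm_scale Rabs_Ropp Rabs_R1; ring. Qed.

Lemma edist_tri n (p q r : pt n) : edist p r <= edist p q + edist q r.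
Proof.
rewrite /edist (enorm_ext (v := fun i => (p i - q i) + (q i - r i))); last by move=> i; ring.
exact: enorm_add. Qed.

Lemma edist_refl n (p : pt n) : edist p p = 0.
Proof.
rewrite /edist (enorm_ext (v := fun i => 0 * p i)); last by move=> i; ring.
rewrite enorm_scale Rabs_R0; ring. Qed.

Lemma coord_le_edist n (p q : pt n) i : Rabs (p i - q i) <= edist p q.
Proof. exact: (coord_le_enorm (fun i => p i - q i)). Qed.

Lemma edist_bound n (p q : pt n) s : (forall i, Rabs (p i - q i) <= s) -> edist p q <= INR n * s.
Proof. move=> H; exact: (enorm_bound (p := fun i => p i - q i)). Qed.

Definition zpt n : pt n := fun _ => 0.

Lemma enorm_edist n (p : pt n) : enorm p = edist p (@zpt n).
Proof. rewrite /edist; apply: enorm_ext => i; rewrite /zpt; ring. Qed.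

Lemma enorm_le_edist n (p q : pt n) : enorm p <= edist p q + enorm q.
Proof. rewrite !enorm_edist; exact: edist_tri. Qed.

Lemma enorm_ge_edist n (p q : pt n) : enorm p - enorm q <= edist p q.
Proof. have := enorm_le_edist p q; lra. Qed.

Definition seg n (p q : pt n) (t : R) : pt n := fun i => p i + t * (q i - p i).

Lemma seg_dist n (p q : pt n) s t : edist (seg p q s) (seg p q t) = Rabs (s - t) * edist p q.
Proof.
rewrite /edist Rabs_minus_sym -enorm_scale; apply: enorm_ext => i; rewrite /seg; ring. Qed.

Lemma seg0 n (p q : pt n) : seg p q 0 = p.
Proof. apply: functional_extensionality => i; rewrite /seg; ring. Qed.
Lemma seg1 n (p q : pt n) : seg p q 1 = q.
Proof. apply: functional_extensionality => i; rewrite /seg; ring. Qed.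

Lemma seg_dist0 n (p q : pt n) t : edist p (seg p q t) = Rabs t * edist p q.
Proof. by rewrite -{1}(seg0 p q) seg_dist Rabs_minus_sym Rminus_0_r. Qed.
Lemma seg_dist1 n (p q : pt n) t : edist (seg p q t) q = Rabs (1 - t) * edist p q.
Proof. by rewrite -{2}(seg1 p q) seg_dist Rabs_minus_sym. Qed.

Lemma closure_incl n (A : rset n) p : A p -> closure A p.
Proof. move=> Ap eps he; exists p; split => //; rewrite edist_refl; lra. Qed.

Lemma closure_mono n (A B : rset n) p : (forall q, A q -> B q) -> closure A p -> closure B p.
Proof. move=> H C eps he; have [q [Aq Hq]] := C eps he; exists q; split => //; exact: H. Qed.

Lemma closure_idem n (A : rset n) p : closure (closure A) p -> closure A p.
Proof.
move=> C eps he; have [q [Cq Hq]] := C (eps/2) ltac:(lra).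
have [r [Ar Hr]] := Cq (eps/2) ltac:(lra).
exists r; split => //; have := edist_tri p q r; lra. Qed.

Lemma boundary_closed n (A : rset n) p : closure (boundary A) p -> boundary A p.
Proof.
move=> C; split; apply: closure_idem; apply: closure_mono C => q []; by [].
Qed.

Lemma Jn_closed n (A : rset n) p : in_Jn A -> closure A p -> A p.
Proof.
move=> [_ [E _]] C; apply/E; rewrite /ci; apply: closure_idem.
apply: closure_mono C => q Aq; by apply/E. Qed.

Lemma Jn_bd n (A : rset n) p : in_Jn A -> boundary A p -> A p.
Proof. move=> J [C _]; exact: Jn_closed J C. Qed.

Lemma crossing n (A : rset n) p q : A p -> ~ A q ->
  exists t, 0 <= t <= 1 /\ boundary A (seg p q t).
Proof.
move=> Ap Aq.
set E := fun t => 0 <= t <= 1 /\ A (seg p q t).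
have Eb : bound E by exists 1 => t [[]].
have Ene : exists t, E t by exists 0; split; [lra| by rewrite seg0].
have [s [Hub Hlub]] := completeness E Eb Ene.
have s0 : 0 <= s by apply: Hub; split; [lra| by rewrite seg0].
have s1 : s <= 1 by apply: Hlub => t [[]].
exists s; split; first lra.
set D := edist p q.
have D0 : 0 <= D by apply: edist_ge0.
split.
- move=> eps he.
  set d := eps / (D + 1).
  have dpos : 0 < d by apply: Rdiv_lt_0_compat; lra.
  have [t [Et ht]] : exists t, E t /\ s - d < t.
    apply: NNPP => H.
    have : s <= s - d; last lra.
    apply: Hlub => t Et; apply: Rnot_lt_le => h; apply: H; exists t; split => //.
  have ts : t <= s by apply: Hub.
  exists (seg p q t); split; first by case: Et.
  rewrite seg_dist -/D Rabs_right; last lra.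
  have : (s - t) * D <= d * D by apply: Rmult_le_compat_r; lra.
  have : d * D < eps.
    rewrite /d; apply: (Rmult_lt_reg_r (D + 1)); first lra.
    field_simplify; lra.
  lra.
- move=> eps he.
  case: (Req_dec s 1) => [s1e|s1n].
    exists q; split => //; rewrite s1e seg1 edist_refl; lra.
  set d := Rmin (eps / (D + 1)) ((1 - s)/2).
  have dpos : 0 < d by apply: Rmin_pos; [apply: Rdiv_lt_0_compat|]; lra.
  have d1 : d <= (1 - s) / 2 by apply: Rmin_r.
  have d2 : d <= eps / (D + 1) by apply: Rmin_l.
  exists (seg p q (s + d)); split.
    move=> Ah; have : s + d <= s; last lra.
    apply: Hub; split => //; lra.
  rewrite seg_dist -/D.
  have -> : s - (s + d) = - d by ring.
  rewrite Rabs_Ropp Rabs_right; last lra.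
  have : d * D <= eps / (D + 1) * D by apply: Rmult_le_compat_r; lra.
  have : eps / (D + 1) * D < eps.
    apply: (Rmult_lt_reg_r (D + 1)); first lra.
    field_simplify; lra.
  lra.
Qed.

Lemma Rdiv_le_0_compat a b : 0 <= a -> 0 < b -> 0 <= a / b.
Proof. move=> ha hb; apply: Rmult_le_pos => //; apply: Rlt_le; exact: Rinv_0_lt_compat. Qed.

Definition cube n (a : pt n) (g : R) : rset n := fun p => forall i, a i <= p i <= a i + g.
Definition subc n (a : pt n) (g : R) (q : nat) (idx : {ffun 'I_n -> 'I_q}) : pt n :=
  fun i => a i + INR (idx i) * (g / INR q).
Arguments subc {n} a g q idx.

Lemma split_coord (q : nat) : (0 < q)%nat -> forall a s x, 0 <= s -> a <= x <= a + INR q * s ->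
  exists k : 'I_q, a + INR k * s <= x <= a + INR k * s + s.
Proof.
elim: q => [//|q IH] _ a s x s0 hx.
case: (posnP q) => [q0|qpos].
  subst q; exists ord0; rewrite /= in hx *; lra.
case: (Rle_lt_dec x (a + INR q * s)) => h.
  have [k hk] := IH qpos a s x s0 ltac:(lra).
  by exists (widen_ord (leqnSn q) k).
exists ord_max; rewrite /=; rewrite S_INR in hx; lra.
Qed.

Lemma cube_split n (q : nat) (hq : (0 < q)%nat) (a : pt n) g p : 0 <= g -> cube a g p ->
  exists idx : {ffun 'I_n -> 'I_q}, cube (subc a g q idx) (g / INR q) p.
Proof.
move=> g0 hp.
have qR : 0 < INR q by apply: lt_0_INR; apply/ltP.
have s0 : 0 <= g / INR q by apply: Rdiv_le_0_compat.
have H : forall i, exists k : 'I_q, a i + INR k * (g / INR q) <= p i <= a i + INR k * (g / INR q) + g / INR q.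
  move=> i; apply: split_coord => //.
  have -> : INR q * (g / INR q) = g by field; lra.
  exact: hp.
set f := fun i => epsilon (inhabits (Ordinal hq)) (fun k : 'I_q => a i + INR k * (g / INR q) <= p i <= a i + INR k * (g / INR q) + g / INR q).
exists [ffun i => f i] => i; rewrite /subc ffunE.
exact: (epsilon_spec (inhabits (Ordinal hq)) _ (H i)).
Qed.

Lemma subc_cube n (q : nat) (hq : (0 < q)%nat) (a : pt n) g idx p : 0 <= g ->
  cube (subc a g q idx) (g / INR q) p -> cube a g p.
Proof.
move=> g0 hp i; have := hp i; rewrite /subc.
have qR : 0 < INR q by apply: lt_0_INR; apply/ltP.
have k1 : INR (idx i) + 1 <= INR q.
  rewrite -S_INR; apply: le_INR; apply/leP; exact: ltn_ord.
have k0 : 0 <= INR (idx i) by apply: pos_INR.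
have s0 : 0 <= g / INR q by apply: Rdiv_le_0_compat.
have : (INR (idx i) + 1) * (g / INR q) <= INR q * (g / INR q) by apply: Rmult_le_compat_r.
have -> : INR q * (g / INR q) = g by field; lra.
nra. Qed.

Lemma fin_min (T : finType) (Q : T -> R -> Prop) :
  (forall t, exists e, 0 < e /\ forall e', 0 < e' <= e -> Q t e') ->
  exists e, 0 < e /\ forall t, Q t e.
Proof.
move=> H.
suff : forall s : seq T, exists e, 0 < e /\ forall t, t \in s -> forall e', 0 < e' <= e -> Q t e'.
  move=> /(_ (enum T)) [e [he H']]; exists e; split => // t.
  apply: H' => //; first by rewrite mem_enum. lra.
elim => [|t s [e [he IH]]].
  exists 1; split => //; lra.
have [e1 [he1 H1]] := H t.
exists (Rmin e e1); split; first by apply: Rmin_pos.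
move=> u; rewrite inE => /orP [/eqP ->|us] e' he'.
  apply: H1; have := Rmin_r e e1; lra.
apply: IH => //; have := Rmin_l e e1; lra.
Qed.

Lemma half_pow_small g eps : 0 < eps -> exists k, g * (/2) ^ k < eps.
Proof.
move=> he.
case: (Rle_lt_dec g 0) => hg.
  exists 0%nat; simpl; lra.
have [N HN] := pow_lt_1_zero (/2) ltac:(rewrite Rabs_right; lra) (eps / g) ltac:(apply: Rdiv_lt_0_compat; lra).
exists N; have := HN N (le_n N); rewrite Rabs_right; last by apply: Rle_ge; apply: pow_le; lra.
move=> h; apply: (Rmult_lt_reg_r (/ g)); first by apply: Rinv_0_lt_compat.
have -> : g * (/ 2) ^ N * / g = (/2) ^ N by field; lra.
exact: h.
Qed.

Section MinExists.
Variable n : nat.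
Variable F : rset n.
Variable q : pt n.
Variable M : R.
Hypothesis Fcl : forall p, closure F p -> F p.
Hypothesis Fne : exists e, F e.
Hypothesis Fb : forall e, F e -> enorm e <= M.

Let Sv := fun r => exists e, F e /\ r = - edist q e.
Let Sv_b : bound Sv.
Proof. exists 0 => r [e [_ ->]]; have := edist_ge0 q e; lra. Qed.
Let Sv_ne : exists r, Sv r.
Proof. have [e he] := Fne; by exists (- edist q e), e. Qed.
Let L := proj1_sig (completeness Sv Sv_b Sv_ne).
Let Llub : is_lub Sv L := proj2_sig (completeness Sv Sv_b Sv_ne).
Let m := - L.

Let m_low : forall e, F e -> m <= edist q e.
Proof. move=> e Fe; have := proj1 Llub (- edist q e) (ex_intro _ e (conj Fe erefl)); rewrite /m; lra. Qed.

Definition good (a : pt n) (s : R) := forall eps, 0 < eps -> exists e, F e /\ cube a s e /\ edist q e < m + eps.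

Let good_split a s : 0 <= s -> good a s -> exists idx : {ffun 'I_n -> 'I_2}, good (subc a s 2 idx) (s / INR 2).
Proof.
move=> s0 G; apply: NNPP => H.
have H' : forall idx : {ffun 'I_n -> 'I_2}, exists e, 0 < e /\ forall e', 0 < e' <= e ->
   forall p, F p -> cube (subc a s 2 idx) (s / INR 2) p -> m + e' <= edist q p.
  move=> idx; apply: NNPP => H1; apply: H; exists idx => eps he.
  apply: NNPP => H2; apply: H1; exists eps; split => // e' he' p Fp cp.
  apply: Rnot_lt_le => h; apply: H2; exists p; split => //; split => //; lra.
have [e [he He]] := fin_min H'.
have [p [Fp [cp hp]]] := G e he.
have [idx hidx] := cube_split (q := 2) (erefl _) s0 cp.
have := He idx p Fp hidx; lra.
Qed.

Let a0 : pt n := fun _ => - M.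
Let g0 := 2 * M.

Let good0 : good a0 g0.
Proof.
move=> eps he.
have [r [[e [Fe ->]] hr]] : exists r, Sv r /\ L - eps < r.
  apply: NNPP => H; have : L <= L - eps; last lra.
  apply: (proj2 Llub) => r Sr; apply: Rnot_lt_le => h; apply: H; by exists r.
exists e; split => //; split; last by rewrite /m; lra.
move=> i; have := coord_le_enorm e i; have := Fb Fe; rewrite /a0 /g0 /Rabs /=.
case: Rcase_abs => ? *; split; lra.
Qed.

Definition nxt (a : pt n) (s : R) : pt n :=
  epsilon (inhabits a) (fun a' => exists idx : {ffun 'I_n -> 'I_2}, a' = subc a s 2 idx /\ (good a s -> good a' (s / 2))).

Fixpoint sq (k : nat) : pt n := match k with 0%nat => a0 | S k => nxt (sq k) (g0 * (/2) ^ k) end.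

Let M0 : 0 <= M.
Proof. have [e he] := Fne; have := Fb he; have := enorm_ge0 e; lra. Qed.

Let nxt_spec a s : 0 <= s -> exists idx : {ffun 'I_n -> 'I_2}, nxt a s = subc a s 2 idx /\ (good a s -> good (nxt a s) (s / 2)).
Proof.
move=> s0; rewrite /nxt.
apply: (epsilon_spec (inhabits a) (fun a' => exists idx : {ffun 'I_n -> 'I_2}, a' = subc a s 2 idx /\ (good a s -> good a' (s / 2)))).
case: (classic (good a s)) => G.
  have [idx hidx] := good_split s0 G; exists (subc a s 2 idx); exists idx; split; first by [].
  move=> _; have -> : s / 2 = s / INR 2 by rewrite /=; field.
  exact: hidx.
exists (subc a s 2 [ffun _ => ord0]); exists [ffun _ => ord0]; split; first by [].
by move=> /G.
Qed.

Let side_ge0 k : 0 <= g0 * (/2) ^ k.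
Proof. apply: Rmult_le_pos; [rewrite /g0; lra| apply: pow_le; lra]. Qed.

Let sq_good k : good (sq k) (g0 * (/2) ^ k).
Proof.
elim: k => [|k IH]; first by rewrite /= Rmult_1_r; exact: good0.
have [idx [E G]] := nxt_spec (sq k) (side_ge0 k).
change (good (nxt (sq k) (g0 * (/2)^k)) (g0 * (/2 * (/2)^k))).
have -> : g0 * (/ 2 * (/ 2) ^ k) = g0 * (/2) ^ k / 2 by field.
exact: G IH.
Qed.

Let sq_step k i : sq k i <= sq k.+1 i <= sq k i + g0 * (/2) ^ k.+1.
Proof.
have [idx [E _]] := nxt_spec (sq k) (side_ge0 k).
rewrite [sq k.+1]/= E /subc.
have k1 : INR (idx i) <= 1.
  have := ltn_ord (idx i); case: (nat_of_ord (idx i)) => [|[|//]] _ /=; lra.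
have k0 := pos_INR (idx i).
have s0 := side_ge0 k.
have -> : g0 * (/ 2) ^ k.+1 = g0 * (/2) ^ k / INR 2 by rewrite /=; field.
have : 0 <= g0 * (/ 2) ^ k / INR 2 by apply: Rdiv_le_0_compat => //=; lra.
nra. Qed.

Let sq_mono k j i : (k <= j)%nat -> sq k i <= sq j i /\ sq j i + g0 * (/2) ^ j <= sq k i + g0 * (/2) ^ k.
Proof.
move=> /subnK <-; elim: (j - k)%nat => [|d [IH1 IH2]]; first by rewrite add0n; lra.
rewrite addSn; have := sq_step (d + k) i.
have -> : g0 * (/ 2) ^ (d + k).+1 = g0 * (/ 2) ^ (d + k) / 2 by rewrite /=; field.
have := side_ge0 (d + k); lra.
Qed.

Let climit i : {l : R | Un_cv (fun k => sq k i) l}.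
Proof.
apply: growing_cv.
  move=> k; exact: (proj1 (sq_step k i)).
exists (sq 0 i + g0) => x [k ->].
have := sq_mono i (leq0n k); have := side_ge0 k; rewrite /= Rmult_1_r; lra.
Qed.

Let c : pt n := fun i => proj1_sig (climit i).

Let c_in k : cube (sq k) (g0 * (/2) ^ k) c.
Proof.
move=> i; rewrite /c; case: (climit i) => l hl /=; split.
  apply: (@growing_ineq (fun j => sq j i) l _ hl k) => j; exact: (proj1 (sq_step j i)).
apply: Rnot_lt_le => h.
have [N HN] := hl (l - (sq k i + g0 * (/ 2) ^ k)) ltac:(lra).
have := HN (maxn N k) ltac:(apply/leP; exact: leq_maxl).
have := sq_mono i (leq_maxr N k); have := side_ge0 (maxn N k).
rewrite /R_dist /Rabs; case: Rcase_abs => ? *; lra.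
Qed.

Lemma min_exists_aux : exists c, F c /\ forall e, F e -> edist q c <= edist q e.
Proof.
have cF : F c.
  apply: Fcl => eps he.
  have [k hk] := half_pow_small (INR n * g0) he.
  have G := sq_good k; have [e [Fe [ce _]]] := G 1 Rlt_0_1.
  exists e; split => //.
  apply: Rle_lt_trans hk; rewrite Rmult_assoc; apply: edist_bound => i.
  have := ce i; have := c_in k i; rewrite /Rabs; case: Rcase_abs => ? *; lra.
exists c; split => // e Fe.
suff : edist q c <= m by have := m_low Fe; lra.
apply: Rnot_lt_le => h.
set d := (edist q c - m) / 3.
have hd : 0 < d by rewrite /d; lra.
have [k hk] := half_pow_small (INR n * g0) hd.
have [e' [Fe' [ce' he']]] := sq_good k hd.
have : edist c e' < d.
  apply: Rle_lt_trans hk; rewrite Rmult_assoc; apply: edist_bound => i.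
  have := ce' i; have := c_in k i; rewrite /Rabs; case: Rcase_abs => ? *; lra.
have := edist_tri q e' c; rewrite (edist_sym e' c) => h1 h2; rewrite /d in he' h1 h2 *; lra.
Qed.
End MinExists.

Lemma min_exists n (F : rset n) q M : (forall p, closure F p -> F p) -> (exists e, F e) ->
  (forall e, F e -> enorm e <= M) -> exists c, F c /\ forall e, F e -> edist q c <= edist q e.
Proof. move=> h1 h2 h3; exact: (min_exists_aux q h1 h2 h3). Qed.

Set Default Proof Using "All".
Section Dist.
Variable n : nat.
Hypothesis hn : (0 < n)%coq_nat.
Variable A : rset n.
Hypothesis AJ : in_Jn A.
Hypothesis Ane : nonempty A.

Lemma bd_ne : exists b, boundary A b.
Proof.
have [M HM] := proj1 AJ.
have [p Ap] := Ane.
have M0 : 0 <= M by have := HM p Ap; have := enorm_ge0 p; lra.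
set q : pt n := fun _ => M + 1.
have nq : ~ A q.
  move=> Aq; have := HM q Aq.
  have i0 : (0 < n)%nat by apply/ltP.
  have := coord_le_enorm q (Ordinal i0); rewrite /q /= Rabs_right; lra.
have [t [_ bt]] := crossing Ap nq; by exists (seg p q t).
Qed.

Definition bM := proj1_sig (constructive_indefinite_description _ (proj1 AJ)).
Lemma bM_spec p : A p -> enorm p <= bM.
Proof. rewrite /bM; case: constructive_indefinite_description => M HM /=; exact: HM. Qed.
Lemma bM_ge0 : 0 <= bM.
Proof. have [p Ap] := Ane; have := bM_spec Ap; have := enorm_ge0 p; lra. Qed.

Notation d q := (dist_set q (boundary A)).

Lemma dist_spec q : is_min_dist q (boundary A) (d q).
Proof.
rewrite /dist_set; apply: epsilon_spec.
have [c [bc Hc]] := min_exists q (@boundary_closed n A) bd_ne (fun e be => bM_spec (Jn_bd AJ be)).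
exists (edist q c); split; first by exists c.
exact: Hc.
Qed.

Lemma d_le q b : boundary A b -> d q <= edist q b.
Proof. exact: (proj2 (dist_spec q)). Qed.
Lemma d_att q : exists b, boundary A b /\ edist q b = d q.
Proof. exact: (proj1 (dist_spec q)). Qed.
Lemma d_ge0 q : 0 <= d q.
Proof. have [b [_ <-]] := d_att q; exact: edist_ge0. Qed.

Lemma d_lip p q : d q <= d p + edist p q.
Proof.
have [b [bb hb]] := d_att p.
have := d_le q bb; have := edist_tri q p b; rewrite (edist_sym q p); lra.
Qed.

Lemma sd_in p : A p -> signed_dist p A = d p.
Proof.
move=> Ap; rewrite /signed_dist.
have := epsilon_spec (inhabits 0) (fun r => (A p -> r = d p) /\ (~ A p -> r = - d p)).
case=> [|h _]; last exact: h.
by exists (d p); split.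
Qed.

Lemma sd_out p : ~ A p -> signed_dist p A = - d p.
Proof.
move=> Ap; rewrite /signed_dist.
have := epsilon_spec (inhabits 0) (fun r => (A p -> r = d p) /\ (~ A p -> r = - d p)).
case=> [|_ h]; last exact: h.
by exists (- d p); split.
Qed.

Lemma sd_lip1 p q : signed_dist q A <= signed_dist p A + edist p q.
Proof.
case: (classic (A p)) => Ap; case: (classic (A q)) => Aq.
- rewrite (sd_in Ap) (sd_in Aq); exact: d_lip.
- rewrite (sd_in Ap) (sd_out Aq); have := d_ge0 p; have := d_ge0 q; have := edist_ge0 p q; lra.
- rewrite (sd_out Ap) (sd_in Aq).
  have [t [t01 bt]] := crossing Aq Ap.
  have h1 := d_le q bt; have h2 := d_le p bt.
  rewrite seg_dist0 Rabs_right in h1; last lra.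
  rewrite edist_sym seg_dist1 Rabs_right in h2; last lra.
  rewrite (edist_sym p q); nra.
- rewrite (sd_out Ap) (sd_out Aq); have := d_lip q p; rewrite edist_sym; lra.
Qed.

Lemma sd_lip p q : Rabs (signed_dist p A - signed_dist q A) <= edist p q.
Proof.
have := sd_lip1 p q; have := sd_lip1 q p; rewrite (edist_sym q p).
rewrite /Rabs; case: Rcase_abs => ? *; lra.
Qed.

Lemma sd_far p : - enorm p - bM <= signed_dist p A <= 3 * bM - enorm p.
Proof.
have [b [bb hb]] := d_att p.
have Ab := Jn_bd AJ bb.
have hbM := bM_spec Ab.
have t1 := enorm_le_edist p b.
have t2 := enorm_le_edist b p.
rewrite (edist_sym b p) hb in t2.
rewrite hb in t1.
have t3 : edist p b <= enorm p + enorm b.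
  rewrite !enorm_edist (edist_sym b); exact: edist_tri.
rewrite hb in t3.
have h0 := bM_ge0.
have h3 := d_ge0 p.
case: (classic (A p)) => Ap.
- have h1 := bM_spec Ap; rewrite (sd_in Ap); split; lra.
- rewrite (sd_out Ap); split; lra.
Qed.

End Dist.
Unset Default Proof Using.

Lemma mul_le_abs x e c : Rabs e <= c -> x * e <= Rabs x * c.
Proof.
move=> h; apply: Rle_trans (Rle_abs _) _; rewrite Rabs_mult.
apply: Rmult_le_compat_l => //; exact: Rabs_pos. Qed.

Definition porous n (S : rset n) (rho alpha : R) :=
  forall p, S p -> forall r, 0 < r <= rho ->
    exists y, edist p y <= r /\ forall q, edist y q < alpha * r -> ~ S q.

Set Default Proof Using "All".
Section F.
Variable n : nat.
Hypothesis hn : (0 < n)%coq_nat.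
Variables A B : rset n.
Hypothesis AJ : in_Jn A.
Hypothesis Ane : nonempty A.
Hypothesis BJ : in_Jn B.
Hypothesis Bne : nonempty B.
Variable x : R.

Notation f := (fABx A B x).
Let L := Rabs x + Rabs (1 - x).

Lemma f_lip p q : Rabs (f p - f q) <= L * edist p q.
Proof.
rewrite /fABx.
have hA := sd_lip hn AJ Ane p q; have hB := sd_lip hn BJ Bne p q.
have -> : x * signed_dist p A + (1 - x) * signed_dist p B -
   (x * signed_dist q A + (1 - x) * signed_dist q B) =
   x * (signed_dist p A - signed_dist q A) + (1 - x) * (signed_dist p B - signed_dist q B) by ring.
apply: Rle_trans (Rabs_triang _ _) _; rewrite !Rabs_mult /L.
have := Rabs_pos x; have := Rabs_pos (1 - x).
have := Rabs_pos (signed_dist p A - signed_dist q A).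
have := Rabs_pos (signed_dist p B - signed_dist q B).
move=> *; nra.
Qed.

Let C := 3 * (bM AJ + bM BJ) * L.

Lemma f_far p : f p <= - enorm p + C.
Proof.
have [a1 a2] := sd_far hn AJ Ane p; have [b1 b2] := sd_far hn BJ Bne p.
have hA0 := bM_ge0 hn AJ Ane; have hB0 := bM_ge0 hn BJ Bne.
set eA := signed_dist p A + enorm p.
set eB := signed_dist p B + enorm p.
have heA : Rabs eA <= 3 * (bM AJ + bM BJ) by rewrite /eA /Rabs; case: Rcase_abs => ? ; lra.
have heB : Rabs eB <= 3 * (bM AJ + bM BJ) by rewrite /eB /Rabs; case: Rcase_abs => ? ; lra.
have E : f p = - enorm p + x * eA + (1 - x) * eB by rewrite /fABx /eA /eB; ring.
rewrite E; have := mul_le_abs x heA; have := mul_le_abs (1 - x) heB; rewrite /C /L => *; nra.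
Qed.

Lemma f_bounded p : 0 <= f p -> enorm p <= C.
Proof. move=> h; have := f_far p; lra. Qed.

Lemma davg_bounded : bounded (dist_avg A B x).
Proof. exists C => p h; exact: f_bounded h. Qed.

Lemma omega_bounded p : Omega A B x p -> enorm p <= C.
Proof. rewrite /Omega => h; apply: f_bounded; lra. Qed.

Lemma bd_davg p : boundary (dist_avg A B x) p -> Omega A B x p.
Proof.
move=> [C1 C2]; rewrite /Omega.
have L0 : 0 <= L by rewrite /L; have := Rabs_pos x; have := Rabs_pos (1 - x); lra.
apply: Rle_antisym.
- apply: Rnot_lt_le => h.
  have [q [nq hq]] := C2 (f p / (L + 1)) ltac:(apply: Rdiv_lt_0_compat; lra).
  apply: nq; rewrite /dist_avg.
  have := f_lip p q; rewrite /Rabs; case: Rcase_abs => ? h2.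
  + lra.
  + have : L * edist p q <= L * (f p / (L + 1)) by apply: Rmult_le_compat_l => //; lra.
    have : L * (f p / (L + 1)) < f p.
      apply: (Rmult_lt_reg_r (L + 1)); first lra. field_simplify; lra.
    move=> *; lra.
- apply: Rnot_lt_le => h.
  have [q [nq hq]] := C1 (- f p / (L + 1)) ltac:(apply: Rdiv_lt_0_compat; lra).
  rewrite /dist_avg in nq.
  have := f_lip p q; rewrite /Rabs; case: Rcase_abs => ? h2.
  + have : L * edist p q <= L * (- f p / (L + 1)) by apply: Rmult_le_compat_l => //; lra.
    have : L * (- f p / (L + 1)) < - f p.
      apply: (Rmult_lt_reg_r (L + 1)); first lra. field_simplify; lra.
    move=> *; lra.
  + lra.
Qed.

Lemma sd_le_d p : signed_dist p A <= dist_set p (boundary A).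
Proof.
have := d_ge0 hn AJ Ane p.
case: (classic (A p)) => Ap; [rewrite (sd_in hn AJ Ane Ap)| rewrite (sd_out hn AJ Ane Ap)]; lra.
Qed.
Lemma sd_ge_md p : - dist_set p (boundary A) <= signed_dist p A.
Proof.
have := d_ge0 hn AJ Ane p.
case: (classic (A p)) => Ap; [rewrite (sd_in hn AJ Ane Ap)| rewrite (sd_out hn AJ Ane Ap)]; lra.
Qed.

Hypothesis hx : 1/2 < x.

Definition Zk (k : nat) : rset n :=
  fun p => f p = 0 /\ / (INR k + 1) <= dist_set p (boundary A).

Let alpha := (x - Rabs (1 - x)) / (2 * (x + Rabs (1 - x))).

Lemma alpha_pos : 0 < alpha.
Proof.
rewrite /alpha; have := Rabs_pos (1 - x).
have : x - Rabs (1 - x) > 0 by rewrite /Rabs; case: Rcase_abs => ?; lra.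
move=> *; apply: Rdiv_lt_0_compat; lra.
Qed.

Lemma alpha_le1 : alpha <= 1.
Proof.
rewrite /alpha; have := Rabs_pos (1 - x) => h.
have hp : 0 < 2 * (x + Rabs (1 - x)) by lra.
apply: (Rmult_le_reg_r (2 * (x + Rabs (1 - x)))) => //.
field_simplify; lra.
Qed.

Lemma alpha_key : x * (1 - alpha) - Rabs (1 - x) * (1 + alpha) > 0.
Proof.
rewrite /alpha; have := Rabs_pos (1 - x) => h.
have : x - Rabs (1 - x) > 0 by rewrite /Rabs; case: Rcase_abs => ?; lra.
move=> h2.
have hp : 0 < x + Rabs (1 - x) by lra.
have -> : x * (1 - (x - Rabs (1 - x)) / (2 * (x + Rabs (1 - x)))) -
   Rabs (1 - x) * (1 + (x - Rabs (1 - x)) / (2 * (x + Rabs (1 - x)))) =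
   (x - Rabs (1 - x)) / 2 by field; lra.
lra.
Qed.

Lemma Zk_porous k : porous (Zk k) (/ (2 * (INR k + 1))) alpha.
Proof.
move=> p [fp hd] r [r0 rr].
have k0 : 0 < INR k + 1 by have := pos_INR k; lra.
set dl := dist_set p (boundary A) in hd *.
have r2 : 2 * r <= dl.
  have : / (2 * (INR k + 1)) = / 2 * / (INR k + 1) by field; lra.
  lra.
have [a [ba ha]] := d_att hn AJ Ane p.
rewrite -/dl in ha.
set t := r / dl.
have dl0 : 0 < dl by lra.
have t01 : 0 <= t <= 1.
  rewrite /t; split; first by apply: Rlt_le; apply: Rdiv_lt_0_compat.
  apply: (Rmult_le_reg_r dl) => //; field_simplify; lra.
exists (seg p a t); split.
  rewrite seg_dist0 Rabs_right; last lra.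
  rewrite ha /t; right; field; lra.
move=> q hq [fq _].
have hpy : edist p (seg p a t) = r.
  rewrite seg_dist0 Rabs_right; last lra.
  rewrite ha /t; field; lra.
have hya : edist (seg p a t) a = dl - r.
  rewrite seg_dist1 Rabs_right; last lra.
  rewrite ha /t; field; lra.
have hdq : dist_set q (boundary A) < alpha * r + (dl - r).
  have := d_le hn AJ Ane q ba; have := edist_tri q (seg p a t) a.
  rewrite (edist_sym q (seg p a t)) hya => *; lra.
have hpq : edist p q < (1 + alpha) * r.
  have := edist_tri p (seg p a t) q; rewrite hpy => *; lra.
have hB := sd_lip hn BJ Bne p q.
have hB' : Rabs (signed_dist p B - signed_dist q B) < (1 + alpha) * r by lra.
have key := alpha_key.
have x0 : 0 < x by lra.
have al1 := alpha_le1.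
have E : f q - f p = x * (signed_dist q A - signed_dist p A) + (1 - x) * (signed_dist q B - signed_dist p B)
  by rewrite /fABx; ring.
have hBB : (1 - x) * (signed_dist q B - signed_dist p B) <= Rabs (1 - x) * ((1 + alpha) * r).
  apply: mul_le_abs; rewrite Rabs_minus_sym; lra.
have hBB' : - (Rabs (1 - x) * ((1 + alpha) * r)) <= (1 - x) * (signed_dist q B - signed_dist p B).
  have := mul_le_abs (1 - x) (Rlt_le _ _ hB').
  have -> : (1 - x) * (signed_dist q B - signed_dist p B) = - ((1 - x) * (signed_dist p B - signed_dist q B)) by ring.
  move=> *; lra.
have kr : 0 < (x * (1 - alpha) - Rabs (1 - x) * (1 + alpha)) * r by apply: Rmult_lt_0_compat; lra.
case: (classic (A p)) => Ap.
- rewrite (sd_in hn AJ Ane Ap) -/dl in E.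
  have := sd_le_d q => *; nra.
- rewrite (sd_out hn AJ Ane Ap) -/dl in E.
  have := sd_ge_md q => *; nra.
Qed.

Lemma omega_cover p : Omega A B x p -> boundary A p \/ exists k, Zk k p.
Proof.
move=> fp.
have [a [ba ha]] := d_att hn AJ Ane p.
case: (Req_dec (dist_set p (boundary A)) 0) => h.
  left; apply: boundary_closed => eps he; exists a; split => //; lra.
right.
have h0 := d_ge0 hn AJ Ane p.
have [k hk] := INR_unbounded (/ dist_set p (boundary A)).
exists k; split => //.
have dp : 0 < dist_set p (boundary A) by lra.
rewrite -(Rinv_inv (dist_set p (boundary A))).
apply: Rinv_le_contravar; first by apply: Rinv_0_lt_compat.
lra.
Qed.

End F.
Unset Default Proof Using.

Definition inbox n (b : pt n * pt n) (p : pt n) := forall i, b.1 i <= p i <= b.2 i.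
Definition validb n (b : pt n * pt n) := forall i, b.1 i <= b.2 i.
Fixpoint covers n (l : seq (pt n * pt n)) (p : pt n) : Prop :=
  match l with [::] => False | b :: l => inbox b p \/ covers l p end.
Fixpoint allvalid n (l : seq (pt n * pt n)) : Prop :=
  match l with [::] => True | b :: l => validb b /\ allvalid l end.
Definition listvol n (l : seq (pt n * pt n)) : R :=
  foldr (fun b acc => box_vol b.1 b.2 + acc) 0 l.

Lemma covers_cat n (l1 l2 : seq (pt n * pt n)) p : covers l1 p \/ covers l2 p -> covers (l1 ++ l2) p.
Proof. elim: l1 => [|b l IH] /=; first by case. by case=> [[h|h]|h]; [left|right; apply: IH; left|right; apply: IH; right]. Qed.
Lemma allvalid_cat n (l1 l2 : seq (pt n * pt n)) : allvalid l1 -> allvalid l2 -> allvalid (l1 ++ l2).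
Proof. elim: l1 => [|b l IH] //= [h1 h2] h3; split => //; exact: IH. Qed.
Lemma listvol_cat n (l1 l2 : seq (pt n * pt n)) : listvol (l1 ++ l2) = listvol l1 + listvol l2.
Proof. rewrite /listvol; elim: l1 => [|b l IH] /=; first ring. rewrite IH; ring. Qed.

Definition lconcat n (T : Type) (s : seq T) (Lf : T -> seq (pt n * pt n)) :=
  foldr (fun t acc => Lf t ++ acc) [::] s.

Lemma box_vol_ge0 n (b : pt n * pt n) : validb b -> 0 <= box_vol b.1 b.2.
Proof. move=> h; rewrite /box_vol; apply: (big_ind (fun x => 0 <= x)) => //; [lra| move=> u v *; nra| move=> i _; have := h i; lra]. Qed.

Lemma listvol_ge0 n (l : seq (pt n * pt n)) : allvalid l -> 0 <= listvol l.
Proof. rewrite /listvol; elim: l => [|b l IH] /=; first lra. move=> [h1 h2]; have := box_vol_ge0 h1; have := IH h2; move=> *; lra. Qed.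

Definition cubebox n (a : pt n) (g : R) : pt n * pt n := (a, fun i => a i + g).
Lemma cubebox_vol n (a : pt n) g : box_vol (cubebox a g).1 (cubebox a g).2 = g ^ n.
Proof. rewrite /box_vol /= (eq_bigr (fun _ => g)); first exact: rprod_const. move=> i _; ring. Qed.

Section Comb.
Variable n : nat.
Variable S : rset n.

Lemma comb (a : pt n) g q (hq : (0 < q)%nat) (s : seq {ffun 'I_n -> 'I_q}) V :
  0 <= g ->
  (forall p, S p -> cube a g p -> forall idx, cube (subc a g q idx) (g / INR q) p -> idx \in s) ->
  (forall idx, idx \in s -> exists l, allvalid l /\ (forall p, S p -> cube (subc a g q idx) (g / INR q) p -> covers l p) /\ listvol l <= V) ->
  exists l, allvalid l /\ (forall p, S p -> cube a g p -> covers l p) /\ listvol l <= INR (size s) * V.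
Proof.
move=> g0 Hin Hl.
have Hl' : forall idx, exists l, idx \in s -> allvalid l /\ (forall p, S p -> cube (subc a g q idx) (g / INR q) p -> covers l p) /\ listvol l <= V.
  move=> idx; case: (boolP (idx \in s)) => h.
    have [l hl] := Hl idx h; by exists l.
  by exists [::].
pose Lf idx := proj1_sig (constructive_indefinite_description _ (Hl' idx)).
have LfP idx : idx \in s -> allvalid (Lf idx) /\ (forall p, S p -> cube (subc a g q idx) (g / INR q) p -> covers (Lf idx) p) /\ listvol (Lf idx) <= V.
  rewrite /Lf; case: constructive_indefinite_description => l hl /=; exact: hl.
exists (lconcat s Lf).
have gen : forall s', {subset s' <= s} -> allvalid (lconcat s' Lf) /\ listvol (lconcat s' Lf) <= INR (size s') * V
   /\ forall p idx, idx \in s' -> S p -> cube (subc a g q idx) (g / INR q) p -> covers (lconcat s' Lf) p.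
  elim => [|t s' IH] sub.
    split => //; split => //; rewrite /listvol /=; lra.
  have -> : lconcat (t :: s') Lf = Lf t ++ lconcat s' Lf by [].
  have -> : INR (size (t :: s')) = INR (size s') + 1 by rewrite -S_INR.
  have ts : t \in s by apply: sub; rewrite inE eqxx.
  have [IH1 [IH2 IH3]] : allvalid (lconcat s' Lf) /\ listvol (lconcat s' Lf) <= INR (size s') * V /\ forall p idx, idx \in s' -> S p -> cube (subc a g q idx) (g / INR q) p -> covers (lconcat s' Lf) p.
    by apply: IH => u hu; apply: sub; rewrite inE hu orbT.
  have [h1 [h2 h3]] := LfP t ts.
  split; first exact: allvalid_cat.
  split.
    rewrite listvol_cat; lra.
  move=> p idx; rewrite inE => /orP [/eqP ->|hi] Sp cp; apply: covers_cat; [left; exact: h2| right; exact: IH3 hi Sp cp].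
have [g1 [g2 g3]] := gen s (fun u hu => hu).
split => //; split => // p Sp cp.
have qR : 0 < INR q by apply: lt_0_INR; apply/ltP.
have [idx hidx] := cube_split hq g0 cp.
exact: g3 (Hin p Sp cp idx hidx) Sp hidx.
Qed.
End Comb.


Lemma INR_expn q k : INR (expn q k) = INR q ^ k.
Proof. elim: k => [|k IH]; first by []. rewrite expnS -multE mult_INR IH /=; ring. Qed.

Section Cover.
Variable n : nat.
Hypothesis hn : (0 < n)%coq_nat.
Variable S : rset n.
Variables rho alpha : R.
Hypothesis rho0 : 0 < rho.
Hypothesis alpha0 : 0 < alpha.
Hypothesis Sp : porous S rho alpha.

Let q := proj1_sig (constructive_indefinite_description _ (INR_unbounded (4 * INR n / alpha + 4))).
Let qbig : INR q > 4 * INR n / alpha + 4.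
Proof. rewrite /q; case: constructive_indefinite_description => k hk /=; exact: hk. Qed.
Let n0 : 0 < INR n.
Proof. exact: lt_0_INR. Qed.
Let q4 : 4 < INR q.
Proof. have : 0 <= 4 * INR n / alpha by apply: Rdiv_le_0_compat; lra. lra. Qed.
Let qpos : (0 < q)%nat.
Proof. apply/ltP; apply: INR_lt; simpl; lra. Qed.
Let qR : 0 < INR q.
Proof. lra. Qed.
Let qn : INR n / INR q < alpha / 4.
Proof.
apply: (Rmult_lt_reg_r (INR q)) => //.
have -> : INR n / INR q * INR q = INR n by field; lra.
have : 4 * INR n / alpha < INR q by lra.
move=> h; apply: (Rmult_lt_reg_r (4 / alpha)); first by apply: Rdiv_lt_0_compat; lra.
have -> : alpha / 4 * INR q * (4 / alpha) = INR q by field; lra.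
have -> : INR n * (4 / alpha) = 4 * INR n / alpha by field; lra.
exact: h.
Qed.

Let Qn := INR q ^ n.
Let Qn1 : 1 <= Qn.
Proof. rewrite /Qn; rewrite -(pow1 n); apply: pow_incr; lra. Qed.
Definition theta := 1 - / Qn.
Lemma th0 : 0 <= theta.
Proof. rewrite /theta; have : / Qn <= 1 by rewrite -Rinv_1; apply: Rinv_le_contravar; lra. lra. Qed.
Lemma th1 : theta < 1.
Proof. rewrite /theta; have : 0 < / Qn by apply: Rinv_0_lt_compat; lra. lra. Qed.

Let card_T : INR #|{ffun 'I_n -> 'I_q}| = Qn.
Proof. by rewrite card_ffun !card_ord INR_expn. Qed.

Let sub_close (a : pt n) (g : R) (idx : {ffun 'I_n -> 'I_q}) (p y : pt n) : cube (subc a g q idx) (g / INR q) p -> cube (subc a g q idx) (g / INR q) y ->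
   forall i, Rabs (p i - y i) <= g / INR q.
Proof. move=> hp hy i; have := hp i; have := hy i; rewrite /Rabs; case: Rcase_abs => ? *; lra. Qed.

Lemma free_sub a g : 0 < g <= 4 * rho -> exists idx : {ffun 'I_n -> 'I_q},
  forall p, cube (subc a g q idx) (g / INR q) p -> ~ S p.
Proof.
move=> [g0 grho].
set c : pt n := fun i => a i + g / 2.
have gq : g / INR q <= g / 4.
  apply: Rmult_le_compat_l; first lra. apply: Rinv_le_contravar; lra.
have gq0 : 0 <= g / INR q by apply: Rdiv_le_0_compat; lra.
case: (classic (exists p, S p /\ forall i, Rabs (p i - c i) <= g / 4)) => [[p [Spp hp]]|H].
- have [y [hy hfree]] := Sp Spp (r := g / 4) ltac:(split; lra).
  have yc : cube a g y.
    move=> i; have := coord_le_edist p y i; have := hp i; rewrite /c /=.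
    rewrite /Rabs; case: Rcase_abs => ? ; case: Rcase_abs => ? *; lra.
  have [idx hidx] := cube_split qpos (Rlt_le _ _ g0) yc.
  exists idx => p' hp' Sp'.
  apply: (hfree p') => //.
  apply: Rle_lt_trans (edist_bound (s := g / INR q) _) _.
    move=> i; rewrite Rabs_minus_sym; exact: sub_close hp' hidx i.
  have : INR n * (g / INR q) = (INR n / INR q) * g by field; lra.
  move=> ->; have : INR n / INR q * g < alpha / 4 * g by apply: Rmult_lt_compat_r.
  lra.
- have cc : cube a g c by move=> i; rewrite /c /=; lra.
  have [idx hidx] := cube_split qpos (Rlt_le _ _ g0) cc.
  exists idx => p' hp' Sp'; apply: H; exists p'; split => // i.
  have := sub_close hp' hidx i; lra.
Qed.

Lemma cover_rec j : forall a g, 0 < g <= 4 * rho -> exists l, allvalid l /\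
   (forall p, S p -> cube a g p -> covers l p) /\ listvol l <= theta ^ j * g ^ n.
Proof.
elim: j => [|j IH] a g hg.
  exists [:: cubebox a g]; split; first by split => // i; rewrite /=; lra.
  split; first by move=> p _ cp; left.
  rewrite /listvol /= cubebox_vol; lra.
have [idx0 h0] := free_sub a hg.
have gq0 : 0 < g / INR q by apply: Rdiv_lt_0_compat; lra.
have gq : g / INR q <= g.
  apply: (Rmult_le_reg_r (INR q)) => //; have -> : g / INR q * INR q = g by field; lra.
  nra.
have H1 : forall p, S p -> cube a g p -> forall idx, cube (subc a g q idx) (g / INR q) p -> idx \in enum (predC1 idx0).
  move=> p Spp cp idx hidx; rewrite mem_enum inE; apply/negP => /eqP E; subst idx.
  exact: (h0 p hidx Spp).
have H2 : forall idx, idx \in enum (predC1 idx0) -> exists l, allvalid l /\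
   (forall p, S p -> cube (subc a g q idx) (g / INR q) p -> covers l p) /\ listvol l <= theta ^ j * (g / INR q) ^ n.
  move=> idx _; apply: IH; split; lra.
have [l [l1 [l2 l3]]] := comb qpos (Rlt_le _ _ (proj1 hg)) H1 H2.
  exists l; split => //; split => //.
  apply: Rle_trans l3 _.
  rewrite -cardE cardC1.
  have E1 : INR #|{ffun 'I_n -> 'I_q}|.-1 = Qn - 1.
    rewrite -card_T.
    have : (0 < #|{ffun 'I_n -> 'I_q}|)%nat by apply/card_gt0P; exists idx0.
    case: #|_| => [//|k _]; rewrite S_INR (_ : k.+1.-1 = k) //; lra.
  rewrite E1 /theta /Qn.
  have hQ : INR q ^ n <> 0 by apply: pow_nonzero; lra.
  rewrite /Rdiv Rpow_mult_distr pow_inv /=.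
  right; field; lra.
Qed.
End Cover.

Definition fin_null n (S : rset n) := forall eps, 0 < eps ->
  exists l, allvalid l /\ (forall p, S p -> covers l p) /\ listvol l <= eps.

Lemma porous_fin_null n (hn : (0 < n)%coq_nat) (S : rset n) rho alpha C :
  0 < rho -> 0 < alpha -> porous S rho alpha -> (forall p, S p -> enorm p <= C) -> fin_null S.
Proof.
move=> r0 a0 Sp SC eps he.
set G := 2 * Rabs C + 2.
have G0 : 0 < G by have := Rabs_pos C; rewrite /G; lra.
set a : pt n := fun _ => - Rabs C - 1.
have Sc : forall p, S p -> cube a G p.
  move=> p h i; have := SC p h; have := coord_le_enorm p i; have := Rle_abs C.
  rewrite /a /G /Rabs; case: Rcase_abs => ?; case: Rcase_abs => ? *; split; lra.
have [q0' hq0'] := INR_unbounded (G / (4 * rho)).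
set q0 := q0'.+1.
have q0R : 0 < INR q0 by apply: lt_0_INR; lia.
have hq0 : (0 < q0)%nat by [].
have Gq : G / INR q0 <= 4 * rho.
  apply: (Rmult_le_reg_r (INR q0)) => //.
  have -> : G / INR q0 * INR q0 = G by field; lra.
  have : G / (4 * rho) < INR q0 by rewrite /q0 S_INR; lra.
  move=> h; have e1 : 4 * rho * (G / (4 * rho)) = G by field; lra.
  have := Rmult_lt_compat_l (4 * rho) _ _ ltac:(lra) h; lra.
have Gq0 : 0 < G / INR q0 by apply: Rdiv_lt_0_compat.
set th := theta n alpha.
have th0' := th0 hn a0; have th1' := th1 hn a0.
rewrite -/th in th0' th1'.
have [j hj] : exists j, th ^ j * G ^ n <= eps.
  have Gn : 0 < G ^ n by apply: pow_lt.
  have [N HN] := pow_lt_1_zero th ltac:(rewrite Rabs_right; lra) (eps / G ^ n) ltac:(apply: Rdiv_lt_0_compat; lra).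
  exists N; have := HN N (le_n N); rewrite Rabs_right; last by apply: Rle_ge; apply: pow_le.
  move=> h; apply: (Rmult_le_reg_r (/ G ^ n)); first by apply: Rinv_0_lt_compat.
  have -> : th ^ N * G ^ n * / G ^ n = th ^ N by field; lra.
  rewrite /Rdiv in h; lra.
have H1 : forall p, S p -> cube a G p -> forall idx, cube (subc a G q0 idx) (G / INR q0) p -> idx \in enum {ffun 'I_n -> 'I_q0}.
  by move=> *; rewrite mem_enum.
have H2 : forall idx, idx \in enum {ffun 'I_n -> 'I_q0} -> exists l, allvalid l /\
   (forall p, S p -> cube (subc a G q0 idx) (G / INR q0) p -> covers l p) /\ listvol l <= th ^ j * (G / INR q0) ^ n.
  move=> idx _; exact: (cover_rec hn a0 Sp j _ (conj Gq0 Gq)).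
have [l [l1 [l2 l3]]] := comb hq0 (Rlt_le _ _ G0) H1 H2.
exists l; split => //; split; first by move=> p h; apply: l2 h (Sc p h).
apply: Rle_trans l3 _; apply: Rle_trans hj.
rewrite -cardE card_ffun !card_ord INR_expn.
have hQ : INR q0 ^ n <> 0 by apply: pow_nonzero; lra.
rewrite /Rdiv Rpow_mult_distr pow_inv.
right; field; lra.
Qed.

Definition dflt n : pt n * pt n := (@zpt n, @zpt n).

Lemma dflt_vol n (hn : (0 < n)%coq_nat) : box_vol (dflt n).1 (dflt n).2 = 0.
Proof.
rewrite /box_vol (eq_bigr (fun _ => 0)); last by move=> i _; rewrite /zpt /=; ring.
rewrite rprod_const; case: n hn => [|k] h; first lia. simpl; ring. Qed.

Lemma nth_vol_sum n (hn : (0 < n)%coq_nat) (l : seq (pt n * pt n)) N : allvalid l ->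
  sum_f_R0 (fun m => box_vol (nth (dflt n) l m).1 (nth (dflt n) l m).2) N <= listvol l.
Proof.
elim: l N => [|b l IH] N /=.
  move=> _; rewrite /listvol /=.
  have -> : sum_f_R0 (fun m => box_vol (nth (dflt n) [::] m).1 (nth (dflt n) [::] m).2) N = sum_f_R0 (fun _ => 0) N.
    apply: sum_eq => i _; rewrite nth_nil; exact: dflt_vol.
  rewrite sum_cte; lra.
move=> [vb vl].
case: N => [|N].
  rewrite /= /listvol /=; have := listvol_ge0 vl; rewrite /listvol; lra.
rewrite decomp_sum; last lia.
rewrite /= /listvol /= -/(listvol l).
have := IH N vl; lra.
Qed.

Lemma eps_pos_half e : 0 < e -> 0 < e / 2.
Proof. move=> *; lra. Qed.

Section Union.
Variable n : nat.
Hypothesis hn : (0 < n)%coq_nat.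
Variable N : rset n.
Variable Sk : nat -> rset n.
Hypothesis Nnull : lebesgue_null N.
Hypothesis Sknull : forall k, fin_null (Sk k).

Fixpoint catP (L : nat -> seq (pt n * pt n)) (K : nat) : seq (pt n * pt n) :=
  match K with 0%nat => L 0%nat | S K => catP L K ++ L (S K) end.

Lemma catP_prefix L K d : exists r, catP L (K + d) = catP L K ++ r.
Proof.
elim: d => [|d [r hr]]; first by exists [::]; rewrite addn0 cats0.
exists (r ++ L (K + d).+1); rewrite addnS /= hr catA //.
Qed.

Lemma catP_size L K : (forall k, (0 < size (L k))%nat) -> (K < size (catP L K))%nat.
Proof.
move=> H; elim: K => [|K IH] /=; first exact: H.
rewrite size_cat; have := H K.+1; lia.
Qed.

Lemma catP_vol L K : listvol (catP L K) = sum_f_R0 (fun k => listvol (L k)) K.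
Proof. elim: K => [|K IH] //=; by rewrite listvol_cat IH. Qed.

Lemma catP_valid L K : (forall k, allvalid (L k)) -> allvalid (catP L K).
Proof. move=> H; elim: K => [|K IH] //=; exact: allvalid_cat. Qed.

Lemma covers_nth (l : seq (pt n * pt n)) p : covers l p -> exists i, (i < size l)%nat /\ inbox (nth (dflt n) l i) p.
Proof.
elim: l => [|b l IH] //= [h|h]; first by exists 0%nat.
have [i [hi hb]] := IH h; by exists i.+1.
Qed.

Lemma geo_sum K : sum_f_R0 (fun k => (/ 2) ^ k.+1) K = 1 - (/ 2) ^ K.+1.
Proof. elim: K => [|K IH] /=; first field. rewrite IH /=; field. Qed.

Lemma allvalid_nth (l : seq (pt n * pt n)) i : allvalid l -> validb (nth (dflt n) l i).
Proof.
elim: l i => [|b l IH] i /=.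
  move=> _; rewrite nth_nil => j; rewrite /dflt /zpt /=; lra.
move=> [h1 h2]; case: i => [|i] //=; exact: IH.
Qed.

Lemma union_null : lebesgue_null (fun p => N p \/ exists k, Sk k p).
Proof.
move=> eps he.
have [a [b [hab [hcov hsum]]]] := Nnull (eps_pos_half he).
have Hl : forall k, exists l, allvalid l /\ (forall p, Sk k p -> covers l p) /\ listvol l <= eps / 2 * (/ 2) ^ k.+1.
  move=> k; apply: Sknull; apply: Rmult_lt_0_compat; first lra; apply: pow_lt; lra.
pose Lk k := proj1_sig (constructive_indefinite_description _ (Hl k)).
have LkP k : allvalid (Lk k) /\ (forall p, Sk k p -> covers (Lk k) p) /\ listvol (Lk k) <= eps / 2 * (/ 2) ^ k.+1.
  rewrite /Lk; case: constructive_indefinite_description => l hl; exact: hl.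
pose L k := (a k, b k) :: Lk k.
have Lvalid : forall k, allvalid (L k) by move=> k; split; [exact: hab | exact: (proj1 (LkP k))].
have Lsize : forall k, (0 < size (L k))%nat by [].
pose s m := nth (dflt n) (catP L m) m.
exists (fun m => (s m).1), (fun m => (s m).2); split.
  move=> m i; exact: (allvalid_nth m (catP_valid m Lvalid) i).
split.
- move=> p hp.
  have [k hk] : exists k, covers (L k) p.
    case: hp => [Np|[k Sp]].
      have [k hk] := hcov p Np; by exists k; left.
    by exists k; right; apply: (proj1 (proj2 (LkP k))).
  have [i [hi hb]] := covers_nth hk.
  have [pre [Eoff offk]] : exists pre, catP L k = pre ++ L k /\ (k <= size pre)%nat.
    case: (k) => [|k']; first by exists [::].
    exists (catP L k'); split => //; have := catP_size k' Lsize; lia.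
  set off := size pre.
  have offs : size pre = off by [].
  exists (off + i)%nat => j.
  have [r hr] := catP_prefix L k (off + i - k)%nat.
  have -> : s (off + i)%nat = nth (dflt n) (catP L k) (off + i).
    rewrite /s (_ : (off + i = k + (off + i - k))%nat) ?hr; last lia.
    rewrite -(_ : (off + i = k + (off + i - k))%nat); last lia.
    rewrite nth_cat Eoff size_cat offs.
    have -> : (off + i < off + size (L k))%nat by lia.
    by [].
  rewrite Eoff nth_cat offs.
  have -> : (off + i < off)%nat = false by lia.
  rewrite (_ : (off + i - off = i)%nat); last lia.
  exact: hb j.
- move=> M.
  have : sum_f_R0 (fun m => box_vol (s m).1 (s m).2) M <= listvol (catP L M).
    apply: Rle_trans (nth_vol_sum hn M (catP_valid M Lvalid)).
    right; apply: sum_eq => m hm.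
    have [r hr] := catP_prefix L m (M - m)%nat.
    rewrite /s (_ : M = (m + (M - m))%nat) ?hr; last lia.
    rewrite nth_cat (_ : (m < size (catP L m))%nat = true) //; exact: catP_size.
  rewrite catP_vol => h; apply: Rle_trans h _.
  have E : forall k, listvol (L k) = box_vol (a k) (b k) + listvol (Lk k) by [].
  rewrite (sum_eq _ (fun k => box_vol (a k) (b k) + listvol (Lk k))); last by move=> k _; exact: E.
  rewrite sum_plus.
  have h1 := hsum M.
  have h2 : sum_f_R0 (fun k => listvol (Lk k)) M <= sum_f_R0 (fun k => eps / 2 * (/ 2) ^ k.+1) M.
    apply: sum_Rle => k _; exact: (proj2 (proj2 (LkP k))).
  have h3 : sum_f_R0 (fun k => eps / 2 * (/ 2) ^ k.+1) M = eps / 2 * (1 - (/ 2) ^ M.+1).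
    clear; elim: M => [|M IH] /=; first field.
    rewrite IH /=; field.
  have h4 : 0 <= (/ 2) ^ M.+1 by apply: pow_le; lra.
  have h5 : eps / 2 * (1 - (/ 2) ^ M.+1) <= eps / 2 by nra.
  lra.
Qed.
End Union.

Lemma null_subset n (S T : rset n) : (forall p, S p -> T p) -> lebesgue_null T -> lebesgue_null S.
Proof.
move=> H NT eps he; have [a [b [h1 [h2 h3]]]] := NT eps he.
exists a, b; split => //; split => // p Sp; exact: h2 (H p Sp).
Qed.

Lemma omega_null_gt n (hn : (0 < n)%coq_nat) (A B : rset n) :
  in_Jn A -> nonempty A -> in_Jn B -> nonempty B -> forall x, 1/2 < x -> lebesgue_null (Omega A B x).
Proof.
move=> AJ Ane BJ Bne x hx.
apply: (null_subset (T := fun p => boundary A p \/ exists k, Zk A B x k p)).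
  move=> p hp; exact: (omega_cover hn AJ Ane BJ Bne hx hp).
apply: union_null => //; first exact: (proj2 (proj2 AJ)).
move=> k.
apply: (porous_fin_null hn (C := 3 * (bM AJ + bM BJ) * (Rabs x + Rabs (1 - x))) _ (alpha_pos hn AJ Ane BJ Bne hx) (Zk_porous hn AJ Ane BJ Bne hx (k := k))).
  apply: Rinv_0_lt_compat; have := pos_INR k; lra.
move=> p [fp _]; apply: (omega_bounded hn AJ Ane BJ Bne); exact: fp.
Qed.

Lemma omega_swap n (A B : rset n) x p : Omega A B x p -> Omega B A (1 - x) p.
Proof. rewrite /Omega /fABx => h; lra. Qed.

Lemma omega_null n (hn : (0 < n)%coq_nat) (A B : rset n) :
  in_Jn A -> nonempty A -> in_Jn B -> nonempty B -> forall x, x <> 1/2 -> lebesgue_null (Omega A B x).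
Proof.
move=> AJ Ane BJ Bne x hx.
case: (Rlt_le_dec (1/2) x) => h; first exact: omega_null_gt.
apply: (null_subset (T := Omega B A (1 - x))); first by move=> p; exact: omega_swap.
apply: omega_null_gt => //; lra.
Qed.

Unset Implicit Arguments.

Theorem mainTheorem6 (n : nat) (hn : (0 < n)%coq_nat) (A B : rset n) :
  in_Jn A -> in_Jn B -> nonempty A -> nonempty B ->
  (zero_measure_condition A B ->
     forall x : R, jordan_measurable (dist_avg A B x)) /\
  (~ zero_measure_condition A B ->
     forall x : R, x <> 1/2 -> jordan_measurable (dist_avg A B x)).
Proof.
move=> AJ BJ Ane Bne.
have base : forall x, lebesgue_null (Omega A B x) -> jordan_measurable (dist_avg A B x).
  move=> x Nx; split; first exact: (davg_bounded hn AJ Ane BJ Bne x).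
  apply: null_subset Nx => p; exact: (bd_davg hn AJ Ane BJ Bne).
split.
- move=> Z x; apply: base.
  case: (Req_dec x (1/2)) => [->|hx]; first exact: Z.
  exact: omega_null.
- move=> _ x hx; apply: base; exact: omega_null.
Qed.
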